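(* Let $k\ge2$ be the cache size, let $1\le r\le k-1$ and $N=k+r$, with the pages being the vertices $1,2,\dots,N$ of the cycle $C_N$ in cyclic order. Let $x=\lfloor\log_2\frac Nr\rfloor$ and $X_r=r(x-1)+\lceil N/2^x\rceil$. For $n\ge1$ let $I_n=\langle 1,2,\dots,N\rangle^n$ (the sequence $1,2,\dots,N$ repeated $n$ times). When FAR (with respect to $C_N$) serves $I_n$, each $k$-phase except the first and possibly the last contains exactly $X_r$ faults, and \[\left\lfloor\frac{nN}{k}\right\rfloor X_r+k-X_r\le\mathrm{FAR}(I_n)\le\left\lfloor\frac{nN}{k}\right\rfloor X_r+k-1.\]
   Context: Paging: a cache holds at most $k$ pages and is initially empty. A request to a page in the cache is a hit; otherwise it is a fault, the page is brought into the cache, evicting a page first if the cache is full. $\mathrm{FAR}(I)$ is the number of faults of FAR on $I$. FAR (relative to the access graph): each requested page is marked; on a fault with a full cache, if all cached pages are marked it first unmarks all pages; it then evicts the unmarked cached page whose graph distance to the nearest marked page is largest, ties broken by evicting the least recently requested. $k$-phases: a request sequence is divided recursively: phase 0 is empty (and is ignored), and for $i\ge1$ phase $i$ is a maximal sequence following phase $i-1$ containing at most $k$ distinct pages. *)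

(* Defs.v *)
From mathcomp Require Import all_boot.
Set Implicit Arguments. Unset Strict Implicit. Unset Printing Implicit Defensive.

(* Pages are the natural numbers 1..N, the vertices of the cycle C_N in
   cyclic order (i adjacent to i+1, and N adjacent to 1). *)

Definition cdist (N a b : nat) : nat :=
  let d := if a <= b then b - a else a - b in minn d (N - d).

(* distance from q to the nearest page of M (M is nonempty whenever used) *)
Definition dist_to (N : nat) (M : seq nat) (q : nat) : nat :=
  foldr (fun m acc => minn (cdist N q m) acc) N M.

(* time since the last request of q in history hist (larger = less recent) *)
Definition age (hist : seq nat) (q : nat) : nat := index q (rev hist).

(* a is a better eviction candidate than b: farther from the marked pages,
   ties broken in favour of the least recently requested page *)
Definition better (N : nat) (hist M : seq nat) (a b : nat) : bool :=
  (dist_to N M b < dist_to N M a) ||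
  ((dist_to N M a == dist_to N M b) && (age hist b < age hist a)).

Definition victim (N : nat) (hist M : seq nat) (cands : seq nat) : nat :=
  foldl (fun best q => if better N hist M q best then q else best)
        (head 0 cands) (behead cands).

(* FAR run: returns, for each request, whether it is a fault.
   hist = requests served so far, cache = cached pages, marks = marked pages *)
Fixpoint far_run (k N : nat) (hist cache marks : seq nat) (s : seq nat)
  : seq bool :=
  match s with
  | [::] => [::]
  | p :: s' =>
    if p \in cache then
      false :: far_run k N (rcons hist p) cache (p :: marks) s'
    else if size cache < k then
      true :: far_run k N (rcons hist p) (p :: cache) (p :: marks) s'
    else
      let marks1 := if all (fun q => q \in marks) cache then [::] else marks in
      let marks2 := p :: marks1 in
      let cands := [seq q <- cache | q \notin marks2] in
      let v := victim N hist marks2 cands in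
      true :: far_run k N (rcons hist p) (p :: rem v cache) marks2 s'
  end.

Definition far_faults (k N : nat) (I : seq nat) : seq bool :=
  far_run k N [::] [::] [::] I.

Definition FAR (k N : nat) (I : seq nat) : nat := count id (far_faults k N I).

Definition phase_len (k : nat) (s : seq nat) : nat :=
  find (fun i => k < size (undup (take i.+1 s))) (iota 0 (size s)).

Fixpoint phase_sizes_aux (fuel k : nat) (s : seq nat) : seq nat :=
  match fuel with
  | 0 => [::]
  | f.+1 => if s is [::] then [::]
            else phase_len k s :: phase_sizes_aux f k (drop (phase_len k s) s)
  end.

(* lengths of the k-phases 1, 2, ... of s (phase 0 is empty and ignored) *)
Definition phase_sizes (k : nat) (s : seq nat) : seq nat :=
  phase_sizes_aux (size s) k s.

Definition far_phase_faults (k N : nat) (I : seq nat) : seq (seq bool) :=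
  reshape (phase_sizes k I) (far_faults k N I).

Definition cycI (N n : nat) : seq nat := flatten (nseq n (iota 1 N)).

Definition xlog (N r : nat) : nat := trunc_log 2 (N %/ r).
Definition Xr (N r : nat) : nat :=
  let x := xlog N r in r * (x - 1) + (N + 2 ^ x).-1 %/ 2 ^ x.

(* Main.v *)
Set Warnings "-notation-overridden".
Require Import Defs.
From mathcomp Require Import all_boot.
Set Warnings "-notation-overridden".
From mathcomp Require Import zify.
Set Implicit Arguments. Unset Strict Implicit. Unset Printing Implicit Defensive.

Lemma bt1 N r a u : a + r < u < N -> N - a < 2 * r ->
  minn (u - a) (N - u) < minn (a + r - a) (N - (a + r)).
Proof. lia. Qed.
Lemma bt2 N k r a u m T : N = k + r -> a + r <= u < N -> u <> m ->
  (N + a = m + m \/ N + a = m + m + 1) -> a + 2 * r <= N -> k + a <= T -> 0 < r ->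
  minn (u - a) (N - u) < minn (m - a) (N - m) \/
  (minn (u - a) (N - u) = minn (m - a) (N - m) /\
   minn T (N - 1 - (u - a)) < minn T (N - 1 - (m - a))).
Proof. lia. Qed.
Lemma bt3 N r a jj u m : 0 < jj < r -> a + 2 * r <= N ->
  (N + a = m + m \/ N + a = m + m + 1) -> a + jj < u < N ->
  ~ (a + jj <= u < a + r) -> ~ (m <= u < m + jj) -> u <> m + jj ->
  minn (u - (a + jj)) (N - u) < minn (m + jj - (a + jj)) (N - (m + jj)).
Proof. lia. Qed.

Section Far.
Variables k r : nat.
Hypothesis hk : 2 <= k.
Hypothesis hr1 : 1 <= r.
Hypothesis hrk : r < k.
Local Notation N := (k + r).

Definition stp (st : seq nat * seq nat * seq nat) (p : nat) :=
  let: (h, c, m) := st in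
  if p \in c then (false, (rcons h p, c, p :: m))
  else if size c < k then (true, (rcons h p, p :: c, p :: m))
  else
    let marks1 := if all (fun q => q \in m) c then [::] else m in
    let marks2 := p :: marks1 in
    let cands := [seq q <- c | q \notin marks2] in
    let v := victim N h marks2 cands in
    (true, (rcons h p, p :: rem v c, marks2)).

Definition runst (st : seq nat * seq nat * seq nat) s :=
  far_run k N st.1.1 st.1.2 st.2 s.

Lemma runst_cons st p s :
  runst st (p :: s) = (stp st p).1 :: runst (stp st p).2 s.
Proof.
case: st => [[h c] m]; rewrite /runst /=.
by case: ifP => //; case: ifP.
Qed.

Definition req t := t %% N + 1.

Fixpoint st_at t := match t with
  | 0 => ([::], [::], [::])
  | t'.+1 => (stp (st_at t') (req t')).2 end.

Definition fault t := (stp (st_at t) (req t)).1.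

Lemma run_iota t0 L :
  runst (st_at t0) (map req (iota t0 L)) = map fault (iota t0 L).
Proof.
elim: L t0 => [|L IH] t0 //=.
by rewrite runst_cons -IH.
Qed.

Lemma hist_at t : (st_at t).1.1 = map req (iota 0 t).
Proof.
elim: t => [|t IH]; first by [].
rewrite -[in RHS]addn1 iotaD map_cat cats1 /=.
move: IH; case: (st_at t) => [[h c] m] /= ->.
by rewrite /stp; case: ifP => _ //; case: ifP.
Qed.

Lemma req_small t : t < N -> req t = t.+1.
Proof. by move=> h; rewrite /req modn_small // addn1. Qed.

Lemma map_req_small t : t <= N -> map req (iota 0 t) = iota 1 t.
Proof.
move=> h; rewrite (_ : iota 1 t = map (addn 1) (iota 0 t)); last by rewrite -iotaDl.
apply/eq_in_map => x.
rewrite mem_iota /= => hx; rewrite req_small; lia.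
Qed.

Lemma req_periodic t : req (t + N) = req t.
Proof. by rewrite /req modnDr. Qed.

Lemma iotaS_r m n : iota m n.+1 = rcons (iota m n) (m + n).
Proof. by rewrite -addn1 iotaD cats1. Qed.

Lemma cold t : t <= k ->
  st_at t = (iota 1 t, rev (iota 1 t), rev (iota 1 t)) /\
  (forall s, s < t -> fault s = true).
Proof.
elim: t => [|t IH] ht; first by split.
have [E Hf] := IH (ltnW ht).
have hreq : req t = t.+1 by rewrite req_small; lia.
have nin : t.+1 \notin rev (iota 1 t) by rewrite mem_rev mem_iota; lia.
have ft : fault t = true.
  by rewrite /fault E /= hreq (negbTE nin) size_rev size_iota ht.
split.
  change (st_at t.+1) with (stp (st_at t) (req t)).2.
  rewrite iotaS_r E /= hreq (negbTE nin) size_rev size_iota ht.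
  by rewrite rev_rcons add1n.
move=> s hs; case: (ltngtP s t) => [hst|hst|->]; first exact: Hf.
  lia.
exact: ft.
Qed.

Lemma req_inj T u v : u < N -> v < N -> req (T + u) = req (T + v) -> u = v.
Proof.
move=> hu hv; rewrite /req => /addIn /eqP.
rewrite -/(_ == _ %[mod N]) eqn_modDl !modn_small //; by move/eqP.
Qed.

Lemma req_range t : 0 < req t <= N.
Proof. rewrite /req; have := ltn_pmod t (_ : 0 < N); lia. Qed.

Lemma req_surj T q : 0 < q <= N -> exists2 u, u < N & q = req (T + u).
Proof.
move=> hq; exists ((q.-1 + N - T %% N) %% N); first by rewrite ltn_mod; lia.
rewrite /req modnDmr.
have hT : T %% N < N by rewrite ltn_mod; lia.
rewrite (_ : T + (q.-1 + N - T %% N) = (T %/ N * N) + (q.-1 + N)).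
  rewrite modnMDl modnDr modn_small; lia.
rewrite {1}(divn_eq T N); lia.
Qed.

Lemma modN_add x d : d < N ->
  (x + d) %% N = if x %% N + d < N then x %% N + d else x %% N + d - N.
Proof.
move=> hd; rewrite -modnDml.
have hx : x %% N < N by rewrite ltn_mod; lia.
case: ifP => h; first by rewrite modn_small.
have E : x %% N + d = (x %% N + d - N) + N by lia.
rewrite {1}E modnDr modn_small; lia.
Qed.

Lemma cdist_sym a b : cdist N a b = cdist N b a.
Proof. rewrite /cdist; case: ifP; case: ifP; lia. Qed.

Lemma cdist_req x d : d < N ->
  cdist N (req x) (req (x + d)) = minn d (N - d).
Proof.
move=> hd; rewrite /req modN_add //.
have hx : x %% N < N by rewrite ltn_mod; lia.
rewrite /cdist; case: (ltnP (x %% N + d) N) => h2; case: ifP => h1; lia.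
Qed.

Lemma age_req t w : w < N ->
  index (req (t + w)) (rev (map req (iota 0 t))) = minn t (N - 1 - w).
Proof.
elim: t w => [|t IH] w hw; first by rewrite /= min0n.
rewrite iotaS_r map_rcons rev_rcons /= add0n.
case: (ltnP w.+1 N) => hw1.
  have -> : t.+1 + w = t + w.+1 by lia.
  have ne : (req t == req (t + w.+1)) = false.
    apply/negbTE/eqP => E; have := @req_inj t 0 w.+1 ltac:(lia) hw1; rewrite addn0 => /(_ E); lia.
  rewrite ne IH //; lia.
have -> : t.+1 + w = t + N by lia.
rewrite req_periodic eqxx; lia.
Qed.

Lemma dist_le M q x : x \in M -> dist_to N M q <= cdist N q x.
Proof.
elim: M => [|y M IH] //=; rewrite inE => /orP [/eqP ->|/IH h]; lia.
Qed.

Lemma dist_ge M q L : L <= N -> (forall x, x \in M -> L <= cdist N q x) ->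
  L <= dist_to N M q.
Proof.
move=> hL; elim: M => [|y M IH] H //=.
have h1 := H y (mem_head _ _).
have h2 : L <= dist_to N M q by apply: IH => x hx; apply: H; rewrite inE hx orbT.
lia.
Qed.


Lemma foldl_max (bt : nat -> nat -> bool) (irr : forall x, ~~ bt x x)
  (tr : forall x y z, bt x y -> bt y z -> bt x z) s b P :
  (forall q, q \in P -> ~~ bt q b) ->
  (foldl (fun best q => if bt q best then q else best) b s) \in b :: s /\
  (forall q, q \in P ++ b :: s ->
     ~~ bt q (foldl (fun best q => if bt q best then q else best) b s)).
Proof.
elim: s b P => [|x s IH] b P HP /=.
  split; first by rewrite mem_head.
  move=> q; rewrite cats1 mem_rcons inE => /orP [/eqP ->|]; [exact: irr| exact: HP].
case: ifP => hxb.
  have HP' : forall q, q \in rcons P b -> ~~ bt q x.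
    move=> q; rewrite mem_rcons inE => /orP [/eqP ->|hq].
      by apply/negP => hbx; have := irr b; rewrite (tr _ _ _ hbx hxb).
    by apply/negP => hqx; have := HP q hq; rewrite (tr _ _ _ hqx hxb).
  have [H1 H2] := IH x (rcons P b) HP'.
  split; first by rewrite inE H1 orbT.
  by move=> q hq; apply: H2; rewrite cat_rcons.
have HP' : forall q, q \in rcons P x -> ~~ bt q b.
  move=> q; rewrite mem_rcons inE => /orP [/eqP ->|hq]; first by rewrite hxb.
  exact: HP.
have [H1 H2] := IH b (rcons P x) HP'.
split; first by move: H1; rewrite !inE => /orP [->|->]; rewrite ?orbT.
move=> q hq; apply: H2; move: hq; rewrite !mem_cat !inE mem_rcons inE.
by case/or3P => [->|->|/orP [->|->]]; rewrite ?orbT.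
Qed.

Lemma victim_eq h M cands w : w \in cands ->
  (forall q, q \in cands -> q != w -> better N h M w q) ->
  victim N h M cands = w.
Proof.
move=> hw H.
have irr : forall x, ~~ better N h M x x by move=> x; rewrite /better; lia.
have tr : forall x y z, better N h M x y -> better N h M y z -> better N h M x z.
  by move=> x y z; rewrite /better; lia.
case: cands hw H => [//|c0 cs] hw H.
have [H1 H2] := @foldl_max _ irr tr cs c0 [::] (fun q (hq : q \in [::]) => ltac:(by [])).
rewrite /victim /=; set v := foldl _ _ _ in H1 H2 *.
case: (eqVneq v w) => // hvw.
by have := H2 w hw; rewrite H.
Qed.


Fixpoint costf fuel d := match fuel with
  | 0 => 0
  | f.+1 => if 2 * r <= d then r + costf f ((d + 1) %/ 2) else d - r end.
Definition cost d := costf d d.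

Lemma costf_fuel f1 f2 d : d <= f1 -> d <= f2 -> costf f1 d = costf f2 d.
Proof.
elim: f1 f2 d => [|f1 IH] [|f2] d h1 h2 /=.
- by [].
- have -> : d = 0 by lia. by case: ifP => h; lia.
- have -> : d = 0 by lia. by case: ifP => h; lia.
case: ifP => // h; congr (_ + _); apply: IH; lia.
Qed.

Lemma cost_eq d : cost d = if 2 * r <= d then r + cost ((d + 1) %/ 2) else d - r.
Proof.
rewrite /cost; case: d => [|d] /=; first by case: ifP => h; lia.
case: ifP => // h; congr (_ + _); apply: costf_fuel; lia.
Qed.

Lemma cost_small d : d < 2 * r -> cost d = d - r.
Proof. by move=> h; rewrite cost_eq; case: ifP => //; lia. Qed.

Lemma cost_pos d : r < d -> 0 < cost d.
Proof. move=> h; rewrite cost_eq; case: ifP => _; lia. Qed.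

Definition mid a := (N + a) %/ 2.
Definition holes a jj u := (a + jj <= u < a + r) || (mid a <= u < mid a + jj).
Definition good i a jj :=
  ((jj == 0) && [&& i <= a, a + r <= N & (i < a) ==> (a + r < N)]) ||
  [&& 0 < jj, jj < r, i == a + jj & a + 2 * r <= N].
Definition remc a jj :=
  if jj == 0 then cost (N - a) else r - jj + cost (N - mid a).
Definition targ a jj := if (jj == 0) && (N - a < 2 * r) then a + r else mid a + jj.
Definition nxt a jj : nat * nat :=
  if (jj == 0) && (N - a < 2 * r) then (a + 1, 0)
  else if jj.+1 == r then (mid a, 0) else (a, jj.+1).

Section Step.
Variables (i a jj : nat).
Hypothesis hg : good i a jj.
Hypothesis hik : i < k.

Lemma hit_good : ~~ holes a jj i -> good i.+1 a jj.
Proof. move: hg; rewrite /good /holes /mid; lia. Qed.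

Hypothesis hh : holes a jj i.

Lemma targ_ok : i < targ a jj < N /\ ~~ holes a jj (targ a jj).
Proof. move: hg hh; rewrite /good /holes /targ /mid; case: ifP => h; lia. Qed.

Lemma nxt_good : good i.+1 (nxt a jj).1 (nxt a jj).2.
Proof.
move: hg hh; rewrite /good /holes /nxt /mid.
case: ifP => h1; [|case: ifP => h2]; rewrite /=; lia.
Qed.

Lemma nxt_mem u : u < N ->
  ((u == i) || ((u != targ a jj) && ~~ holes a jj u)) =
  ~~ holes (nxt a jj).1 (nxt a jj).2 u.
Proof.
move=> hu; move: hg hh; rewrite /good /holes /nxt /targ /mid.
case: ifP => h1; [|case: ifP => h2]; rewrite /=; lia.
Qed.


Lemma nxt_rem : remc a jj = (remc (nxt a jj).1 (nxt a jj).2).+1.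
Proof.
have hN : a <= N by move: hg; rewrite /good; lia.
have E : N - mid a = (N - a + 1) %/ 2 by rewrite /mid; lia.
have G := hg; have H := hh; move: G H; rewrite /good /holes => G H.
rewrite /nxt.
case: (eqVneq jj 0) => [hj|hj].
  subst jj => /=; case: (ltnP (N - a) (2 * r)) => h1 /=.
    rewrite /remc /= !cost_small; lia.
  rewrite /remc /= (cost_eq (N - a)) ifT; last lia.
  by case: (eqVneq 1 r) => [h2|h2] /=; rewrite E; lia.
rewrite ?(negbTE hj) /=.
case: (eqVneq jj.+1 r) => h2 /=; rewrite /remc /= (negbTE hj) /=; lia.
Qed.

Lemma targ_better T u : k + i <= T -> i < u < N -> ~~ holes a jj u ->
  u != targ a jj ->
  minn (u - i) (N - u) < minn (targ a jj - i) (N - targ a jj) \/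
  (minn (u - i) (N - u) = minn (targ a jj - i) (N - targ a jj) /\
   minn T (N - 1 - (u - i)) < minn T (N - 1 - (targ a jj - i))).
Proof.
move=> hT hu hnu hut.
have G := hg; have H := hh.
have hm : N + a = mid a + mid a \/ N + a = mid a + mid a + 1 by rewrite /mid; lia.
move: G H hnu hut; rewrite /good /holes /targ.
move: hm; set m := mid a; clearbody m => hm G H hnu hut.
case: (eqVneq jj 0) => [hj|hj].
  subst jj; have hia : i = a by lia.
  subst i; move: hut; case: (ltnP (N - a) (2 * r)) => h1 /= hut.
    left; rewrite addn0 in hnu; apply: bt1; lia.
  rewrite addn0; apply: (bt2 (k := k) (r := r)); lia.
left; move: hut; rewrite (negbTE hj) /= => hut.
have -> : i = a + jj by lia.
apply: (bt3 (r := r)); lia.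
Qed.

End Step.

Lemma dist_arc T i M x :
  (forall q, (q \in M) = (q \in map (fun u => req (T + u)) (iota 0 i.+1))) ->
  i < x < N -> dist_to N M (req (T + x)) = minn (x - i) (N - x).
Proof.
move=> HM hx; apply/eqP; rewrite eqn_leq; apply/andP; split.
  have h1 : req (T + i) \in M by rewrite HM; apply/mapP; exists i => //; rewrite mem_iota; lia.
  have h2 : req (T + 0) \in M by rewrite HM; apply/mapP; exists 0 => //; rewrite mem_iota; lia.
  have d1 := dist_le (req (T + x)) h1; have d2 := dist_le (req (T + x)) h2.
  have E1 : cdist N (req (T + x)) (req (T + i)) = minn (x - i) (N - (x - i)).
    by rewrite cdist_sym (_ : T + x = T + i + (x - i)) ?cdist_req; lia.
  have E2 : cdist N (req (T + x)) (req (T + 0)) = minn (x - 0) (N - (x - 0)).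
    by rewrite cdist_sym (_ : T + x = T + 0 + (x - 0)) ?cdist_req; lia.
  rewrite E1 in d1; rewrite E2 in d2; lia.
apply: dist_ge; first lia.
move=> y; rewrite HM => /mapP [v]; rewrite mem_iota => hv ->.
rewrite cdist_sym (_ : T + x = T + v + (x - v)); last lia.
rewrite cdist_req; lia.
Qed.

Definition Inv T i : Prop :=
  exists a jj, good i a jj /\
   uniq (st_at (T + i)).1.2 /\ size (st_at (T + i)).1.2 = k /\
   (forall q, q \in (st_at (T + i)).1.2 -> 0 < q <= N) /\
   (forall u, u < N -> (req (T + u) \in (st_at (T + i)).1.2) = ~~ holes a jj u) /\
   ((i = 0 /\ a = 0 /\ jj = 0 /\
      all (fun q => q \in (st_at (T + i)).2) (st_at (T + i)).1.2) \/
    (0 < i /\ forall q, (q \in (st_at (T + i)).2) =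
                        (q \in map (fun u => req (T + u)) (iota 0 i)))) /\
   count id (map fault (iota T i)) + remc a jj = cost N.

Lemma count_iotaS T i :
  count id (map fault (iota T i.+1)) = count id (map fault (iota T i)) + fault (T + i).
Proof. by rewrite iotaS_r map_rcons -cats1 count_cat /= addn0; case: fault. Qed.

Lemma inv_step T i : k <= T -> i < k -> Inv T i -> Inv T i.+1.
Proof.
move=> hT hik [a [jj [hg [hU [hS [hR [hM [hK hC]]]]]]]].
have Est : st_at (T + i.+1) = (stp (st_at (T + i)) (req (T + i))).2 by rewrite addnS.
have Ef : fault (T + i) = (stp (st_at (T + i)) (req (T + i))).1 by [].
have hh0 := hist_at (T + i).
have hiN : i < N by clear -hik; lia.
have inj : forall u v, u < N -> v < N -> (req (T + u) == req (T + v)) = (u == v).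
  move=> u v hu' hv'; apply/eqP/eqP => [|->//]; exact: req_inj.
have Ag : forall x, i <= x < N -> index (req (T + x)) (rev (map req (iota 0 (T + i))))
    = minn (T + i) (N - 1 - (x - i)).
  move=> x hx; rewrite (_ : T + x = (T + i) + (x - i)); last by clear -hx; lia.
  by rewrite age_req; clear -hx; lia.
move: Est Ef hU hS hR hM hK hh0.
case: (st_at (T + i)) => [[h c] m] /= Est Ef hU hS hR hM hK hh0.
rewrite /Inv Est count_iotaS Ef.
case hhi: (holes a jj i).
-
  have pc : req (T + i) \notin c by rewrite hM // hhi.
  have [htiN htn] := targ_ok hg hik hhi.
  have hti : i < targ a jj by case/andP: htiN.
  have htN : targ a jj < N by case/andP: htiN.
  have hhw := @targ_better i a jj hg hik hhi (T + i).
  move: hti htN htn hhw; set w := targ a jj => hti htN htn hhw.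
  have wc : req (T + w) \in c by rewrite hM.
  have notM2' : forall u, u < N ->
      (req (T + u) \in map (fun u => req (T + u)) (iota 0 i.+1)) = (u <= i).
    move=> u hu'; apply/mapP/idP => [[v]|hui].
      rewrite mem_iota => hv /eqP; rewrite inj //; last by clear -hv hiN; lia.
      by move/eqP=> ->; clear -hv; lia.
    by exists u => //; rewrite mem_iota; clear -hui; lia.
  set M2 := req (T + i) :: (if all (fun q => q \in m) c then [::] else m).
  have HM2 : forall q, (q \in M2) = (q \in map (fun u => req (T + u)) (iota 0 i.+1)).
    move=> q; rewrite iotaS_r map_rcons mem_rcons /M2 !inE add0n; congr (_ || _).
    case: hK => [[hi0 [ha0 [hj0 hall]]]|[hi0 hmi]].
      by rewrite hall hi0.
    have -> : all (fun q => q \in m) c = false.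
      apply/negbTE/negP => /allP /(_ _ wc); rewrite hmi => /mapP [v].
      rewrite mem_iota => hv /eqP; rewrite inj //; last by clear -hv hiN; lia.
      by move/eqP => E; clear -E hv hti; lia.
    exact: hmi.
  have notM2 : forall u, u < N -> (req (T + u) \in M2) = (u <= i).
    by move=> u hu'; rewrite HM2 notM2'.
  have hv : victim N h M2 [seq q <- c | q \notin M2] = req (T + w).
    apply: victim_eq; first by rewrite mem_filter wc notM2 // -ltnNge hti.
    move=> q; rewrite mem_filter => /andP [qM qc] qw.
    have [u hu' equ] := req_surj T (hR q qc).
    rewrite equ in qM qc qw *.
    have hnu : ~~ holes a jj u by rewrite -hM.
    have hui : i < u by move: qM; rewrite notM2 // -ltnNge.
    have huw : u != w by move: qw; rewrite inj.
    have hB := hhw u (ltac:(by rewrite leq_add2r)) (ltac:(by rewrite hui hu')) hnu huw.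
    rewrite /better /age hh0 (dist_arc (x := u) HM2); last by rewrite hui.
    rewrite (dist_arc (x := w) HM2); last by rewrite hti.
    rewrite !Ag; [|by rewrite htN ltnW|by rewrite hu' ltnW].
    clear -hB; lia.
  rewrite (negbTE pc) hS ltnn /= hv.
  exists (nxt a jj).1, (nxt a jj).2.
  split; first exact: nxt_good.
  split.
    rewrite /= rem_uniq // andbT; apply/negP => /mem_rem; by apply/negP.
  split; first by rewrite /= size_rem // hS; clear -hk; lia.
  split.
    move=> q; rewrite inE => /orP [/eqP ->|/mem_rem]; [exact: req_range | exact: hR].
  split.
    move=> u hu'; rewrite inE (mem_rem_uniq _ hU) inE /= inj // hM // inj //.
    exact: nxt_mem.
  split; first by right; split.
  have := nxt_rem hg hik hhi; rewrite /=; clear -hC; lia.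
- have pc : req (T + i) \in c by rewrite hM // hhi.
  rewrite pc /=.
  exists a, jj.
  split; first by apply: hit_good; rewrite // hhi.
  do 4 (split; first by []).
  split; last by rewrite /= addn0.
  right; split; first by [].
  case: hK => [[hi0 [ha0 [hj0 _]]]|[hi0 hmi]].
    by move: hhi; rewrite hi0 ha0 hj0 /holes; clear -hr1; lia.
  move=> q; rewrite inE hmi.
  change (q \in req (T + 0) :: _) with (q \in map (fun u => req (T + u)) (iota 0 i.+1)).
  by rewrite iotaS_r map_rcons mem_rcons inE add0n.
Qed.


Lemma inv_init : Inv k 0.
Proof.
have [E _] := cold (leqnn k).
rewrite /Inv addn0 E /=; exists 0, 0.
split; first by rewrite /good; clear -hr1; lia.
split; first by rewrite rev_uniq iota_uniq.
split; first by rewrite size_rev size_iota.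
split; first by move=> q; rewrite mem_rev mem_iota; clear; lia.
split.
  move=> u hu; rewrite mem_rev mem_iota /holes.
  case: (ltnP u r) => hur.
    rewrite req_small; last by clear -hu hur; lia.
    clear -hur; lia.
  rewrite (_ : k + u = (u - r) + N); last by clear -hur; lia.
  rewrite req_periodic req_small; last by clear -hu hur; lia.
  clear -hur hu; lia.
split; first by left; do 3 split => //; apply/allP.
by rewrite /remc /= subn0.
Qed.

Lemma inv_all T L : k <= T -> Inv T 0 -> L <= k -> Inv T L.
Proof.
move=> hT H0; elim: L => [//|L IH] hL.
apply: inv_step => //; apply: IH; exact: ltnW.
Qed.

Lemma inv_end T : Inv T k -> (forall u, u < N ->
   (req (T + u) \in (st_at (T + k)).1.2) = (u < k)) /\
   (forall q, (q \in (st_at (T + k)).2) =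
                        (q \in map (fun u => req (T + u)) (iota 0 k))) /\
   count id (map fault (iota T k)) = cost N.
Proof.
case=> a [jj [hg [hU [hS [hR [hM [hK hC]]]]]]].
have [ha hj] : a = k /\ jj = 0 by move: hg; rewrite /good; clear -hr1; lia.
subst a jj.
split.
  move=> u hu; rewrite hM // /holes; clear -hu; lia.
split.
  case: hK => [[h0 _]|[_ hmi]]; [clear -h0 hk; lia | exact: hmi].
rewrite /remc /= (_ : N - k = r) in hC; last by clear; lia.
rewrite cost_small in hC; last by clear -hr1; lia.
by rewrite subnn addn0 in hC.
Qed.

Lemma inv_trans T : Inv T k -> Inv (T + k) 0.
Proof.
move=> H; have [hM2 [hm2 _]] := inv_end H.
case: H => a [jj [hg [hU [hS [hR _]]]]].
rewrite /Inv addn0; exists 0, 0.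
split; first by rewrite /good; clear -hr1; lia.
do 3 (split; first by []).
split.
  move=> u hu; rewrite /holes.
  case: (ltnP u r) => hur.
    rewrite -addnA hM2; last by clear -hu hur; lia.
    clear -hur; lia.
  rewrite (_ : T + k + u = T + (u - r) + N); last by clear -hur; lia.
  rewrite req_periodic hM2; last by clear -hu hur; lia.
  clear -hur hu; lia.
split.
  left; do 3 split => //; apply/allP => q qc; rewrite hm2.
  have [v hv equ] := req_surj T (hR q qc).
  move: qc; rewrite equ hM2 // => hkv.
  by apply/mapP; exists v => //; rewrite mem_iota.
by rewrite /remc /= subn0.
Qed.

Lemma inv_phase j : Inv (j.+1 * k) 0.
Proof.
elim: j => [|j IH]; first by rewrite mul1n; exact: inv_init.
have hT : k <= j.+1 * k by rewrite leq_pmull.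
rewrite mulSn addnC; apply: inv_trans; apply: inv_all => //.
Qed.

Lemma phase_full j : count id (map fault (iota (j.+1 * k) k)) = cost N.
Proof.
have hT : k <= j.+1 * k by rewrite leq_pmull.
have [_ [_ ->]] := inv_end (inv_all hT (inv_phase j) (leqnn k)); done.
Qed.

Lemma phase_part j L : L < k -> count id (map fault (iota (j.+1 * k) L)) < cost N.
Proof.
move=> hL.
have hT : k <= j.+1 * k by rewrite leq_pmull.
case: (inv_all hT (inv_phase j) (ltnW hL)) => a [jj [hg [_ [_ [_ [_ [_ hC]]]]]]].
have : 0 < remc a jj.
  rewrite /remc; move: hg; rewrite /good.
  case: (eqVneq jj 0) => [->|hj] /= G.
    apply: cost_pos; clear -G hL; lia.
  clear -G hj; lia.
clear -hC; lia.
Qed.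

Lemma phase0 : count id (map fault (iota 0 k)) = k.
Proof.
have [_ H] := cold (leqnn k).
rewrite count_map (@eq_in_count _ _ predT); first by rewrite count_predT size_iota.
by move=> x; rewrite mem_iota /= => /H ->.
Qed.


Definition ce t := (N.-1 %/ 2 ^ t).+1.

Lemma ce0 : ce 0 = N.
Proof. rewrite /ce expn0 divn1; clear -hk; lia. Qed.

Lemma ceS t : ce t.+1 = (ce t + 1) %/ 2.
Proof.
rewrite /ce expnSr divnMA; set y := N.-1 %/ 2 ^ t; clear; lia.
Qed.

Lemma ce_ge t : N <= ce t * 2 ^ t.
Proof.
have := @ltn_ceil N.-1 (2 ^ t) (expn_gt0 _ _); rewrite /ce; clear -hk; lia.
Qed.

Lemma ce_le t M : N.-1 < M * 2 ^ t -> ce t <= M.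
Proof. by rewrite /ce -ltn_divLR ?expn_gt0. Qed.

Lemma cost_iter t : (forall s, s < t -> 2 * r <= ce s) -> cost N = r * t + cost (ce t).
Proof.
elim: t => [|t IH] H; first by rewrite ce0 muln0.
rewrite IH; last by move=> s hs; apply: H; exact: ltnW.
rewrite (cost_eq (ce t)) ifT; last exact: H.
by rewrite ceS mulnSr addnA.
Qed.

Lemma cost_Xr : cost N = Xr N r.
Proof.
rewrite /Xr /xlog; set x := trunc_log 2 (N %/ r).
have hNr : 0 < N %/ r by rewrite divn_gt0 //; clear -hrk; lia.
have hx1 : 1 <= x by apply: trunc_log_max => //; rewrite expn1 leq_divRL //; clear -hrk; lia.
have hxp : 2 ^ x * r <= N by rewrite -leq_divRL //; exact: trunc_logP.
have hxl : N < 2 ^ x.+1 * r by rewrite -ltn_divLR //; exact: trunc_log_ltn.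
have hP : 0 < 2 ^ x := expn_gt0 _ _.
have E : (N + 2 ^ x).-1 %/ 2 ^ x = ce x.
  rewrite (_ : (N + 2 ^ x).-1 = N.-1 + 1 * 2 ^ x); last by clear -hk; lia.
  by rewrite divnDMl // addn1.
rewrite E (cost_iter (t := x)).
  have h1 : ce x <= 2 * r.
    apply: ce_le; rewrite expnSr in hxl; clear -hxl hk; lia.
  have h2 : r <= ce x.
    by rewrite -(leq_pmul2r hP) mulnC; exact: leq_trans hxp (ce_ge x).
  have -> : r * x = r * (x - 1) + r by rewrite -mulnSr; congr (_ * _); clear -hx1; lia.
  case: (ltnP (ce x) (2 * r)) => h3.
    rewrite cost_small //; clear -h2; lia.
  have -> : ce x = 2 * r by clear -h1 h3; lia.
  rewrite cost_eq ifT // (_ : (2 * r + 1) %/ 2 = r); last by clear; lia.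
  rewrite cost_small; last by clear -hr1; lia.
  clear; lia.
move=> s hs.
have hs2 : 2 ^ s.+1 <= 2 ^ x by rewrite leq_exp2l.
rewrite expnSr in hs2.
have hPs : 0 < 2 ^ s := expn_gt0 _ _.
rewrite -(leq_pmul2r hPs); apply: leq_trans (ce_ge s).
have : 2 ^ s * 2 * r <= N by apply: leq_trans hxp; rewrite leq_mul2r hs2 orbT.
by move=> h; apply: leq_trans h; rewrite (mulnC (2 * r)) mulnA.
Qed.


Lemma cycI_req n : cycI N n = map req (iota 0 (n * N)).
Proof.
elim: n => [//|n IH].
rewrite (_ : cycI N n.+1 = iota 1 N ++ cycI N n) // IH mulSn (iotaD 0 N) map_cat add0n (map_req_small (leqnn N)).
congr (_ ++ _).
rewrite (_ : iota N (n * N) = map (addn N) (iota 0 (n * N))); last by rewrite -iotaDl addn0.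
rewrite -map_comp; apply: eq_map => x /=; by rewrite addnC req_periodic.
Qed.

Lemma far_faults_req L : far_faults k N (map req (iota 0 L)) = map fault (iota 0 L).
Proof. exact: (run_iota 0 L). Qed.

Lemma uniq_req t m : m <= N -> uniq (map req (iota t m)).
Proof.
move=> hm; rewrite map_inj_in_uniq ?iota_uniq //.
move=> x y; rewrite !mem_iota => hx hy.
rewrite (_ : x = t + (x - t)); last by clear -hx; lia.
rewrite (_ : y = t + (y - t)); last by clear -hy; lia.
move/req_inj => E; rewrite E //; clear -hx hm hy; lia.
Qed.

Lemma phase_len_req t L : phase_len k (map req (iota t L)) = minn k L.
Proof.
rewrite /phase_len size_map size_iota.
set P := fun i => _.
have HP : forall i, i <= k -> i < L -> P i = (k <= i).
  move=> i hi hiL; rewrite /P -map_take take_iota undup_id; last first.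
    apply: uniq_req; clear -hi hrk hr1; lia.
  rewrite size_map size_iota; clear -hiL; lia.
rewrite {1}(_ : L = minn k L + (L - minn k L)); last by clear; lia.
rewrite iotaD find_cat.
have -> : has P (iota 0 (minn k L)) = false.
  apply/negbTE/hasPn => i; rewrite mem_iota => hi.
  rewrite HP; first (clear -hi; lia); clear -hi; lia.
rewrite size_iota add0n.
case: (leqP L k) => hLk.
  by rewrite subnn addn0.
rewrite (_ : L - k = (L - k - 1).+1); last by clear -hLk; lia.
by rewrite /= HP // leqnn addn0.
Qed.

Definition psz L := nseq (L %/ k) k ++ (if L %% k == 0 then [::] else [:: L %% k]).

Lemma psz_aux fuel t L : L <= fuel ->
  phase_sizes_aux fuel k (map req (iota t L)) = psz L.
Proof.
have hk0 : 0 < k by clear -hk; lia.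
elim: fuel t L => [|f IH] t L hL.
  have -> : L = 0 by clear -hL; lia.
  by rewrite /psz div0n mod0n.
case: L hL => [|L] hL; first by rewrite /psz div0n mod0n.
have E1 := phase_len_req t L.+1.
rewrite [map req (iota t L.+1)]/= in E1 *.
rewrite [phase_sizes_aux _ _ _]/= E1.
have E2 : drop (minn k L.+1) (req t :: map req (iota t.+1 L)) =
          map req (iota (t + minn k L.+1) (L.+1 - minn k L.+1)).
  by change (req t :: map req (iota t.+1 L)) with (map req (iota t L.+1)); rewrite -map_drop drop_iota.
rewrite E2.
case: (leqP L.+1 k) => hLk.
  rewrite subnn /=; case: f IH hL => [|f] IH hL /=.
  - rewrite /psz; case: (ltngtP L.+1 k) => h.
    + by rewrite divn_small // modn_small.
    + by move: hLk; rewrite leqNgt h.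
    + by rewrite h divnn modnn hk0.
  - rewrite /psz; case: (ltngtP L.+1 k) => h.
    + by rewrite divn_small // modn_small.
    + by move: hLk; rewrite leqNgt h.
    + by rewrite h divnn modnn hk0.
rewrite IH; last by clear -hL hLk hk; lia.
rewrite /psz.
have E3 : L.+1 = (L.+1 - k) + 1 * k by clear -hLk; lia.
have -> : L.+1 %/ k = ((L.+1 - k) %/ k).+1 by rewrite {1}E3 divnDMl // addn1.
have -> : L.+1 %% k = (L.+1 - k) %% k by rewrite {1}E3 mul1n modnDr.
by [].
Qed.

Lemma phase_sizes_req L : phase_sizes k (map req (iota 0 L)) = psz L.
Proof. by rewrite /phase_sizes size_map size_iota psz_aux. Qed.


Lemma prefix_count q' : count id (map fault (iota 0 (q'.+1 * k))) = k + q' * cost N.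
Proof.
elim: q' => [|q' IH]; first by rewrite mul1n phase0 mul0n addn0.
rewrite mulSn addnC iotaD map_cat count_cat IH add0n phase_full mulSn.
clear; lia.
Qed.

Lemma main n : 1 <= n ->
  let X := Xr N r in
  let ph := far_phase_faults k N (cycI N n) in
  (forall j, 0 < j -> j < (size ph).-1 -> count id (nth [::] ph j) = X) /\
  ((n * N) %/ k) * X + k <= FAR k N (cycI N n) + X /\
  FAR k N (cycI N n) + 1 <= ((n * N) %/ k) * X + k.
Proof.
move=> hn X ph.
have hX : X = cost N by rewrite /X cost_Xr.
have hk0 : 0 < k by clear -hk; lia.
set L := n * N.
have EI : cycI N n = map req (iota 0 L) := cycI_req n.
have Eph : ph = reshape (psz L) (map fault (iota 0 L)).
  by rewrite /ph /far_phase_faults EI phase_sizes_req far_faults_req.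
have hNL : N <= L by rewrite /L leq_pmull.
have hq : 0 < L %/ k by rewrite divn_gt0 //; clear -hNL hr1; lia.
have hLq : L = L %/ k * k + L %% k := divn_eq L k.
have hrm : L %% k < k := ltn_pmod _ hk0.
move: hq hLq hrm; set q := L %/ k; set rm := L %% k => hq hLq hrm.
split.
  move=> j hj0 hj.
  have hjq : j < q.
    move: hj; rewrite Eph size_reshape /psz size_cat size_nseq.
    by case: (rm == 0) => /=; clear; lia.
  rewrite Eph nth_reshape.
  have -> : nth 0 (psz L) j = k.
    by rewrite /psz -/q nth_cat size_nseq hjq nth_nseq hjq.
  have -> : take j (psz L) = nseq j k.
    by rewrite /psz -/q take_cat size_nseq hjq take_nseq // ltnW.
  rewrite sumn_nseq -map_drop -map_take drop_iota take_iota add0n.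
  have -> : minn k (L - k * j) = k.
    have : j.+1 * k <= q * k by rewrite leq_mul2r hjq orbT.
    rewrite mulSn mulnC; clear -hLq; lia.
  case: j hj0 {hj hjq} => [//|j] _.
  by rewrite mulnC phase_full hX.
have EF : FAR k N (cycI N n) = count id (map fault (iota 0 L)).
  by rewrite /FAR EI far_faults_req.
rewrite EF {1 2}hLq iotaD map_cat count_cat add0n.
case: q hq hLq => [//|q'] _ hLq.
rewrite prefix_count.
have := phase_part q' hrm.
rewrite hX mulSn; clear; lia.
Qed.

End Far.

Unset Implicit Arguments.
Theorem lemma13 (k r n : nat) :
  2 <= k -> 1 <= r <= k - 1 -> 1 <= n ->
  let N := k + r in
  let X := Xr N r in
  let ph := far_phase_faults k N (cycI N n) in
  (forall j, 0 < j -> j < (size ph).-1 -> count id (nth [::] ph j) = X) /\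
  ((n * N) %/ k) * X + k <= FAR k N (cycI N n) + X /\
  FAR k N (cycI N n) + 1 <= ((n * N) %/ k) * X + k.
Proof.
move=> hk /andP [hr1 hrk] hn.
have hrk' : r < k by clear -hk hrk; lia.
exact: (main hk hr1 hrk' hn).
Qed.
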